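(* Let $\mathcal M$ be a countable transitive model of $\mathsf{ZFC}'$ and let $\mathbb P\in\mathcal M$ be a forcing by Silver trees. Then there exists a countable forcing by Silver trees $\mathbb Q$ such that $\mathbb P\sqsubset_{\mathcal M}\mathbb Q$.
   Context: $\mathsf{ZFC}'$ is ZFC without the Power Set axiom, plus the axiom asserting that $\mathcal P(\omega)$ exists. $2^{<\omega}$ is the set of finite binary strings. A set $T\subseteq 2^{<\omega}$ is a Silver tree if there are strings $u_0,u_1,\dots$ such that $T$ consists exactly of all strings $u_0{}^\frown i_0{}^\frown\cdots{}^\frown u_m{}^\frown i_m$ ($m<\omega$, $i_k\in\{0,1\}$) and all their initial segments; $[T]\subseteq 2^\omega$ is the set of branches; $T\restriction u=\{t\in T:u\subseteq t\text{ or }t\subseteq u\}$. Actions of strings $\sigma$ on reals ($(\sigma\cdot x)(k)=x(k)+\sigma(k)\bmod2$ for $k<|\sigma|$, else $x(k)$) and on strings ($(\sigma\cdot t)(j)=t(j)+\sigma(j)\bmod 2$ for $j<\min(|\sigma|,|t|)$, else $t(j)$); $\sigma\cdot T=\{\sigma\cdot t:t\in T\}$. A forcing by Silver trees is a set of Silver trees closed under $T\mapsto T\restriction u$ ($u\in T$) and $T\mapsto\sigma\cdot T$, ordered by inclusion. For continuous $f:2^\omega\to2^\omega$, its code is $\langle K_{k,i}:k<\omega,i=0,1\rangle$ where $K_{k,i}$ is the set of $\subseteq$-minimal strings $s$ with $f(x)(k)=i$ for all $x\supset s$. $f$ is regular on $T_0\in\mathbb P$ inside $\mathbb P$ if there are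 no $T'\in\mathbb P$, $T'\subseteq T_0$, and $\sigma$ with $f(x)=\sigma\cdot x$ for all $x\in[T']$. $\mathbb P\sqsubset_{\mathcal M}\mathbb Q$ means: (A) $\mathbb Q$ is dense in $\mathbb Q\cup\mathbb P$; (B) if $D\in\mathcal M$, $D\subseteq\mathbb P$ is pre-dense in $\mathbb P$ and $U\in\mathbb Q$, then $U\subseteq\bigcup D'$ for some finite $D'\subseteq D$; (C) if $T_0\in\mathbb P$, $f$ is continuous with code in $\mathcal M$ and regular on $T_0$ inside $\mathbb P$, and $U,V\in\mathbb Q$, $U\subseteq T_0$, then $[V]\cap f[[U]]=\emptyset$. *)

(* Defs.v *)
From Stdlib Require Import List Arith Bool.
Import ListNotations.

Inductive form : Type :=
| FIn  : nat -> nat -> form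
| FEq  : nat -> nat -> form
| FNot : form -> form
| FAnd : form -> form -> form
| FOr  : form -> form -> form
| FImp : form -> form -> form
| FAll : nat -> form -> form
| FEx  : nat -> form -> form.

Definition FIff (a b : form) : form := FAnd (FImp a b) (FImp b a).

Fixpoint free_in (v : nat) (p : form) : Prop :=
  match p with
  | FIn x y | FEq x y => v = x \/ v = y
  | FNot a => free_in v a
  | FAnd a b | FOr a b | FImp a b => free_in v a \/ free_in v b
  | FAll x a | FEx x a => v <> x /\ free_in v a
  end.

Record structure : Type := { carrier : Type; elem : carrier -> carrier -> Prop }.

Definition upd {A : Type} (e : nat -> A) (x : nat) (a : A) : nat -> A :=
  fun y => if Nat.eqb y x then a else e y.

Fixpoint sat (M : structure) (e : nat -> carrier M) (p : form) : Prop :=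
  match p with
  | FIn x y => elem M (e x) (e y)
  | FEq x y => e x = e y
  | FNot a => ~ sat M e a
  | FAnd a b => sat M e a /\ sat M e b
  | FOr a b => sat M e a \/ sat M e b
  | FImp a b => sat M e a -> sat M e b
  | FAll x a => forall c, sat M (upd e x c) a
  | FEx x a => exists c, sat M (upd e x c) a
  end.

Definition f_empty (e z : nat) : form := FAll z (FNot (FIn z e)).
Definition f_succ (s y z : nat) : form :=
  FAll z (FIff (FIn z s) (FOr (FIn z y) (FEq z y))).
Definition f_inductive (I e y s z : nat) : form :=
  FAnd (FEx e (FAnd (FIn e I) (f_empty e z)))
       (FAll y (FImp (FIn y I) (FEx s (FAnd (FIn s I) (f_succ s y z))))).
Definition f_upair (z x y t : nat) : form :=
  FAll t (FIff (FIn t z) (FOr (FEq t x) (FEq t y))).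
Definition f_opair (p x y u v t : nat) : form :=
  FEx u (FEx v (FAnd (f_upair u x x t) (FAnd (f_upair v x y t) (f_upair p u v t)))).
Definition f_rel (R x y : nat) : form :=
  FEx 20 (FAnd (FIn 20 R) (f_opair 20 x y 21 22 23)).

(* R (var 1) is a strict well-ordering of A (var 0) *)
Definition f_wellorders : form :=
  FAnd (FAll 10 (FImp (FIn 10 0) (FNot (f_rel 1 10 10))))
 (FAnd (FAll 10 (FAll 11 (FAll 12 (FImp (FAnd (FIn 10 0) (FAnd (FIn 11 0) (FIn 12 0)))
          (FImp (FAnd (f_rel 1 10 11) (f_rel 1 11 12)) (f_rel 1 10 12))))))
 (FAnd (FAll 10 (FAll 11 (FImp (FAnd (FIn 10 0) (FIn 11 0))
          (FOr (f_rel 1 10 11) (FOr (FEq 10 11) (f_rel 1 11 10))))))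
       (FAll 13 (FImp (FAnd (FAll 10 (FImp (FIn 10 13) (FIn 10 0))) (FEx 10 (FIn 10 13)))
          (FEx 14 (FAnd (FIn 14 13) (FAll 10 (FImp (FIn 10 13) (FNot (f_rel 1 10 14)))))))))).

(* w (var 0) is omega: the least inductive set *)
Definition f_is_omega : form :=
  FAnd (f_inductive 0 1 2 3 4)
       (FAll 5 (FImp (f_inductive 5 1 2 3 4) (FAll 6 (FImp (FIn 6 0) (FIn 6 5))))).

(* The axioms of ZFC' = ZFC - Power Set + "P(omega) exists".
   Free variables of an axiom are parameters: a structure satisfies an
   axiom when it satisfies it under every assignment (universal closure). *)
Inductive ZFCprime : form -> Prop :=
| ax_ext : ZFCprime
    (FAll 0 (FAll 1 (FImp (FAll 2 (FIff (FIn 2 0) (FIn 2 1))) (FEq 0 1))))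
| ax_found : ZFCprime
    (FAll 0 (FImp (FEx 1 (FIn 1 0))
       (FEx 1 (FAnd (FIn 1 0) (FNot (FEx 2 (FAnd (FIn 2 1) (FIn 2 0))))))))
| ax_pair : ZFCprime (FAll 0 (FAll 1 (FEx 2 (FAnd (FIn 0 2) (FIn 1 2)))))
| ax_union : ZFCprime
    (FAll 0 (FEx 1 (FAll 2 (FAll 3 (FImp (FAnd (FIn 3 2) (FIn 2 0)) (FIn 3 1))))))
| ax_inf : ZFCprime (FEx 0 (f_inductive 0 1 2 3 4))
| ax_sep : forall (phi : form) (a b x : nat),
    a <> b -> a <> x -> b <> x -> ~ free_in b phi ->
    ZFCprime (FAll a (FEx b (FAll x (FIff (FIn x b) (FAnd (FIn x a) phi)))))
| ax_repl : forall (phi : form) (a b x y y2 : nat),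
    NoDup [a; b; x; y; y2] -> ~ free_in b phi -> ~ free_in y2 phi ->
    ZFCprime
      (FAll a (FImp
         (FAnd (FAll x (FImp (FIn x a) (FEx y phi)))
               (FAll x (FImp (FIn x a) (FAll y (FAll y2
                  (FImp phi (FImp (FEx y (FAnd (FEq y y2) phi)) (FEq y y2))))))))
         (FEx b (FAll x (FImp (FIn x a) (FEx y (FAnd (FIn y b) phi)))))))
| ax_choice : ZFCprime (FAll 0 (FEx 1 f_wellorders))
| ax_pomega : ZFCprime
    (FEx 0 (FAnd f_is_omega
       (FEx 7 (FAll 8 (FIff (FIn 8 7) (FAll 9 (FImp (FIn 9 8) (FIn 9 0)))))))).

(* A countable {∈}-structure bs
   isomorphic (Mostowski collapse) to a countable transitive set with the
   true membership relation iff it is well-founded and extensional. *)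
Definition ctm_ZFCprime (M : structure) : Prop :=
  inhabited (carrier M) /\
  (forall p, ZFCprime p -> forall e, sat M e p) /\
  well_founded (elem M) /\
  (forall a b, (forall x, elem M x a <-> elem M x b) -> a = b) /\
  (exists g : nat -> carrier M, forall a, exists n, g n = a).

Fixpoint codes_nat (M : structure) (a : carrier M) (n : nat) : Prop :=
  match n with
  | 0 => forall x, ~ elem M x a
  | S n' => exists a', codes_nat M a' n' /\ forall x, elem M x a <-> (elem M x a' \/ x = a')
  end.

Definition codes_pair (M : structure) {X Y : Type}
  (c1 : carrier M -> X -> Prop) (c2 : carrier M -> Y -> Prop)
  (a : carrier M) (xy : X * Y) : Prop :=
  exists u v x' y', c1 x' (fst xy) /\ c2 y' (snd xy) /\
    (forall t, elem M t a <-> t = u \/ t = v) /\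
    (forall t, elem M t u <-> t = x') /\
    (forall t, elem M t v <-> t = x' \/ t = y').

Definition codes_set (M : structure) {X : Type} (c : carrier M -> X -> Prop)
  (a : carrier M) (S : X -> Prop) : Prop :=
  (forall x, elem M x a -> exists s, S s /\ c x s) /\
  (forall s, S s -> exists x, elem M x a /\ c x s).

Definition in_model (M : structure) {X : Type} (c : carrier M -> X -> Prop) (x : X) : Prop :=
  exists a, c a x.

Definition string := list bool.
Definition real := nat -> bool.
Definition tree := string -> Prop.

Definition bit (b : bool) : nat := if b then 1 else 0.

(* a finite binary string s is the function |s| -> 2, a set of pairs *)
Definition string_graph (s : string) (kv : nat * nat) : Prop :=
  exists b, nth_error s (fst kv) = Some b /\ snd kv = bit b.

Definition codes_string (M : structure) (a : carrier M) (s : string) : Prop :=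
  codes_set M (codes_pair M (codes_nat M) (codes_nat M)) a (string_graph s).
Definition codes_strset (M : structure) (a : carrier M) (T : tree) : Prop :=
  codes_set M (codes_string M) a T.
Definition codes_treeset (M : structure) (a : carrier M) (P : tree -> Prop) : Prop :=
  codes_set M (codes_strset M) a P.

(* code <K_{k,i}> as the function on omega x 2 : (k,i) |-> K_{k,i} *)
Definition code_graph (K : nat -> bool -> tree) (z : (nat * nat) * tree) : Prop :=
  exists b, snd (fst z) = bit b /\ forall t, snd z t <-> K (fst (fst z)) b t.
Definition codes_fcode (M : structure) (a : carrier M) (K : nat -> bool -> tree) : Prop :=
  codes_set M (codes_pair M (codes_pair M (codes_nat M) (codes_nat M)) (codes_strset M))
    a (code_graph K).

Definition prefix (s t : string) : Prop := exists r, t = s ++ r.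
Definition restr (x : real) (n : nat) : string := map x (seq 0 n).
Definition extends (x : real) (s : string) : Prop := restr x (length s) = s.

Fixpoint build_from (u : nat -> string) (k : nat) (bs : list bool) : string :=
  match bs with
  | [] => []
  | i :: bs' => u k ++ i :: build_from u (S k) bs'
  end.
Definition silver_build (u : nat -> string) (bs : list bool) : string := build_from u 0 bs.

Definition is_silver (T : tree) : Prop :=
  exists u : nat -> string, forall t,
    T t <-> exists bs, bs <> [] /\ prefix t (silver_build u bs).

Definition body (T : tree) (x : real) : Prop := forall n, T (restr x n).

Definition tree_restrict (T : tree) (u : string) : tree :=
  fun t => T t /\ (prefix u t \/ prefix t u).

Fixpoint act_string (sigma t : string) : string :=
  match sigma, t with
  | a :: sigma', b :: t' => xorb b a :: act_string sigma' t'
  | _, _ => t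
  end.
Definition act_real (sigma : string) (x : real) : real :=
  fun k => match nth_error sigma k with Some a => xorb (x k) a | None => x k end.
Definition act_tree (sigma : string) (T : tree) : tree :=
  fun t' => exists t, T t /\ t' = act_string sigma t.

Definition subtree (T U : tree) : Prop := forall t, T t -> U t.

Definition silver_forcing (P : tree -> Prop) : Prop :=
  (forall T, P T -> is_silver T) /\
  (forall T u, P T -> T u -> P (tree_restrict T u)) /\
  (forall T sigma, P T -> P (act_tree sigma T)).

Definition countable_trees (Q : tree -> Prop) : Prop :=
  exists e : nat -> tree, forall T, Q T -> exists n, e n = T.

Definition continuous (f : real -> real) : Prop :=
  forall x k, exists n, forall y, restr y n = restr x n -> f y k = f x k.

Definition fcode (f : real -> real) (k : nat) (i : bool) (s : string) : Prop :=
  (forall x, extends x s -> f x k = i) /\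
  (forall s', prefix s' s -> s' <> s -> ~ (forall x, extends x s' -> f x k = i)).

Definition predense (P D : tree -> Prop) : Prop :=
  forall T, P T -> exists T', D T' /\ exists R, P R /\ subtree R T /\ subtree R T'.

Definition regular (P : tree -> Prop) (T0 : tree) (f : real -> real) : Prop :=
  ~ exists T' sigma, P T' /\ subtree T' T0 /\
      forall x, body T' x -> forall k, f x k = act_real sigma x k.

Definition sqsubset (M : structure) (P Q : tree -> Prop) : Prop :=
  (* (A) *)
  (forall T, Q T \/ P T -> exists U, Q U /\ subtree U T) /\
  (* (B) *)
  (forall D : tree -> Prop, in_model M (codes_treeset M) D ->
     (forall T, D T -> P T) -> predense P D ->
     forall U, Q U -> exists D' : list tree,
       (forall T, In T D' -> D T) /\ (forall t, U t -> exists T, In T D' /\ T t)) /\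
  (* (C) *)
  (forall (T0 : tree) (f : real -> real), P T0 -> continuous f ->
     in_model M (codes_fcode M) (fcode f) -> regular P T0 f ->
     forall U V, Q U -> Q V -> subtree U T0 ->
     forall x, body U x -> ~ body V (f x)).

(* Main.v *)
Require Import Defs.
From Stdlib Require Import List Arith Bool Lia PeanoNat Cantor.
From Stdlib Require Import Classical ClassicalEpsilon FunctionalExtensionality PropExtensionality.
Import ListNotations.

Definition pat := nat -> option bool.
Definition sbit (s : string) (i : nat) : bool := nth i s false.
Definition compat (p : pat) (t : string) : Prop :=
  forall i b, i < length t -> p i = Some b -> nth i t false = b.
Definition tof (p : pat) : tree := fun t => compat p t.
Definition inb (p : pat) (x : real) : Prop := forall i b, p i = Some b -> x i = b.
Definition silverp (p : pat) : Prop := forall n, exists i, n <= i /\ p i = None.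
Definition prefines (r q : pat) : Prop := forall i b, q i = Some b -> r i = Some b.
Definition actp (s : string) (p : pat) : pat :=
  fun i => match p i with Some b => Some (xorb b (sbit s i)) | None => None end.
Definition rp (p : pat) (w : string) : pat :=
  fun i => if i <? length w then Some (sbit w i) else p i.

Lemma length_restr x n : length (restr x n) = n.
Proof. unfold restr. rewrite length_map, length_seq. reflexivity. Qed.

Lemma nth_restr x n i d : i < n -> nth i (restr x n) d = x i.
Proof.
  intro H. unfold restr.
  rewrite nth_indep with (d' := x 0) by (rewrite length_map, length_seq; lia).
  rewrite map_nth, seq_nth by lia. reflexivity.
Qed.

Lemma restr_eq_iff x y n : restr x n = restr y n <-> forall i, i < n -> x i = y i.
Proof.
  split.
  - intros H i Hi. rewrite <- (nth_restr x n i false Hi), <- (nth_restr y n i false Hi), H. reflexivity.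
  - intros H. apply nth_ext with (d := false) (d' := false).
    + rewrite !length_restr; reflexivity.
    + intros i Hi. rewrite length_restr in Hi. rewrite !nth_restr by lia. auto.
Qed.

Lemma inb_restr p x n : inb p x -> compat p (restr x n).
Proof.
  intros H i b Hi Hp. rewrite length_restr in Hi. rewrite nth_restr by lia. auto.
Qed.

Definition fillx (t : string) (p : pat) : real :=
  fun i => if i <? length t then nth i t false else match p i with Some b => b | None => false end.

Lemma fillx_inb t p : compat p t -> inb p (fillx t p).
Proof.
  intros H i b Hp. unfold fillx. destruct (Nat.ltb_spec i (length t)).
  - apply H; auto.
  - rewrite Hp. reflexivity.
Qed.

Lemma fillx_restr t p : restr (fillx t p) (length t) = t.
Proof.
  apply nth_ext with (d := false) (d' := false).
  - rewrite length_restr; reflexivity.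
  - intros i Hi. rewrite length_restr in Hi. rewrite nth_restr by lia.
    unfold fillx. destruct (Nat.ltb_spec i (length t)); [reflexivity| lia].
Qed.

Lemma tof_ext p t : tof p t <-> exists x, inb p x /\ restr x (length t) = t.
Proof.
  split.
  - intro H. exists (fillx t p). split; [apply fillx_inb; auto | apply fillx_restr].
  - intros [x [Hx Ht]]. rewrite <- Ht. apply inb_restr; auto.
Qed.

Lemma tof_body p x : body (tof p) x <-> inb p x.
Proof.
  split.
  - intros H i b Hp. specialize (H (S i)). unfold tof, compat in H. specialize (H i b).
    rewrite length_restr, nth_restr in H by lia.
    apply H; auto.
  - intros H n. apply inb_restr; auto.
Qed.

Lemma prefines_inb r q x : prefines r q -> inb r x -> inb q x.
Proof. intros H1 H2 i b Hq. apply H2, H1, Hq. Qed.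

Lemma tof_sub r q : subtree (tof r) (tof q) <-> prefines r q.
Proof.
  split.
  - intros H i b Hq.
    set (x := fun n => match r n with Some c => c | None => if n =? i then negb b else false end).
    assert (Hx : inb r x). { intros n c Hr. unfold x. rewrite Hr. reflexivity. }
    assert (Ht := H _ (inb_restr r x (S i) Hx)).
    specialize (Ht i b). rewrite length_restr, nth_restr in Ht by lia.
    specialize (Ht (Nat.lt_succ_diag_r i) Hq).
    unfold x in Ht. destruct (r i) eqn:E.
    + congruence.
    + rewrite Nat.eqb_refl in Ht. destruct b; discriminate.
  - intros H t Ht i b Hi Hq. apply Ht; auto.
Qed.

Lemma sub_body T U x : subtree T U -> body T x -> body U x.
Proof. intros H1 H2 n. apply H1, H2. Qed.

Lemma act_string_length s t : length (act_string s t) = length t.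
Proof.
  revert t; induction s as [|a s IH]; intros [|b t]; simpl; auto.
Qed.

Lemma act_string_nth s t i : i < length t ->
  nth i (act_string s t) false = xorb (nth i t false) (sbit s i).
Proof.
  unfold sbit. revert t i; induction s as [|a s IH]; intros [|b t] i Hi; simpl in *; try lia.
  - destruct i; [destruct b|destruct (nth i t false)]; reflexivity.
  - destruct i; simpl; auto. apply IH. lia.
Qed.

Lemma act_string_invol s t : act_string s (act_string s t) = t.
Proof.
  revert t; induction s as [|a s IH]; intros [|b t]; simpl; auto.
  rewrite IH. destruct a, b; reflexivity.
Qed.

Lemma act_real_eq s x i : act_real s x i = xorb (x i) (sbit s i).
Proof.
  unfold act_real, sbit. destruct (nth_error s i) eqn:E.
  - rewrite (nth_error_nth s i false E). reflexivity.
  - apply nth_error_None in E. rewrite nth_overflow by auto. rewrite xorb_false_r. reflexivity.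
Qed.

Lemma act_real_invol s x : act_real s (act_real s x) = x.
Proof.
  apply functional_extensionality. intro i. rewrite !act_real_eq.
  destruct (x i), (sbit s i); reflexivity.
Qed.

Lemma inb_act s p x : inb (actp s p) x <-> inb p (act_real s x).
Proof.
  unfold inb, actp. split.
  - intros H i b Hp. specialize (H i (xorb b (sbit s i))). rewrite Hp in H.
    rewrite act_real_eq, H by reflexivity. destruct b, (sbit s i); reflexivity.
  - intros H i c Hp. destruct (p i) as [b|] eqn:E; [|discriminate]. injection Hp as <-.
    specialize (H i b E). rewrite act_real_eq in H. rewrite <- H.
    destruct (x i), (sbit s i); reflexivity.
Qed.

Lemma actp_invol s p : actp s (actp s p) = p.
Proof.
  apply functional_extensionality. intro i. unfold actp.
  destruct (p i) as [b|]; auto. destruct b, (sbit s i); reflexivity.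
Qed.

Lemma tof_act s p : tof (actp s p) = act_tree s (tof p).
Proof.
  apply functional_extensionality; intro t'. apply propositional_extensionality.
  unfold act_tree, tof, compat, actp. split.
  - intros H. exists (act_string s t'). split.
    + intros i b Hi Hp. rewrite act_string_length in Hi.
      rewrite act_string_nth by auto. specialize (H i (xorb b (sbit s i)) Hi).
      rewrite Hp in H. rewrite H by reflexivity. destruct b, (sbit s i); reflexivity.
    + rewrite act_string_invol. reflexivity.
  - intros [t [Ht ->]] i c Hi Hp. rewrite act_string_length in Hi.
    rewrite act_string_nth by auto.
    destruct (p i) as [b|] eqn:E; [|discriminate]. injection Hp as <-.
    rewrite (Ht i b Hi E). reflexivity.
Qed.

Lemma prefines_refl p : prefines p p.
Proof. intros i b H; auto. Qed.
Lemma prefines_trans a b c : prefines a b -> prefines b c -> prefines a c.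
Proof. intros H1 H2 i x H. apply H1, H2, H. Qed.
Lemma prefines_act s r q : prefines r q -> prefines (actp s r) (actp s q).
Proof.
  intros H i b Hq. unfold actp in *. destruct (q i) eqn:E; [|discriminate].
  rewrite (H _ _ E). exact Hq.
Qed.

Lemma prefix_nth s t i : prefix s t -> i < length s -> nth i t false = nth i s false.
Proof. intros [r ->] Hi. rewrite app_nth1 by auto. reflexivity. Qed.

Lemma comparable_iff w t :
  (prefix w t \/ prefix t w) <-> (forall i, i < length w -> i < length t -> nth i w false = nth i t false).
Proof.
  revert t; induction w as [|a w IH]; intros [|b t]; simpl.
  - split; [intros; lia| intros; left; exists []; reflexivity].
  - split; [intros; lia| intros; left; exists (b::t); reflexivity].
  - split; [intros; lia| intros; right; exists (a::w); reflexivity].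
  - split.
    + intros [[r Hr]|[r Hr]] i H1 H2; injection Hr as Hr1 Hr2; subst.
      * destruct i; auto. rewrite app_nth1 by lia. reflexivity.
      * destruct i; auto. rewrite app_nth1 by lia. reflexivity.
    + intros H. assert (a = b) by (apply (H 0); lia). subst.
      assert (Hc : prefix w t \/ prefix t w).
      { apply IH. intros i H1 H2. apply (H (S i)); lia. }
      destruct Hc as [[r Hr]|[r Hr]]; [left|right]; exists r; rewrite Hr; reflexivity.
Qed.

Lemma tof_rp p w : compat p w -> tof (rp p w) = tree_restrict (tof p) w.
Proof.
  intros Hw. apply functional_extensionality; intro t. apply propositional_extensionality.
  unfold tree_restrict, tof, rp, compat, sbit. split.
  - intros H. split.
    + intros i b Hi Hp. specialize (H i). destruct (Nat.ltb_spec i (length w)).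
      * rewrite (H (nth i w false) Hi eq_refl). apply Hw; auto.
      * apply H; auto.
    + apply comparable_iff. intros i H1 H2. specialize (H i (nth i w false) H2).
      destruct (Nat.ltb_spec i (length w)); [|lia]. symmetry; auto.
  - intros [H Hc] i b Hi Hp. rewrite comparable_iff in Hc.
    destruct (Nat.ltb_spec i (length w)).
    + injection Hp as <-. symmetry; auto.
    + auto.
Qed.

Lemma inb_rp p w x : compat p w -> (inb (rp p w) x <-> inb p x /\ restr x (length w) = w).
Proof.
  intro Hw. unfold inb, rp, sbit. split.
  - intros H.
    assert (H2 : forall i, i < length w -> x i = nth i w false).
    { intros i Hi. apply (H i). apply Nat.ltb_lt in Hi. rewrite Hi. reflexivity. }
    split.
    + intros i b Hp. destruct (Nat.ltb_spec i (length w)).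
      * rewrite H2 by auto. apply Hw; auto.
      * apply H. destruct (Nat.ltb_spec i (length w)); [lia|auto].
    + apply nth_ext with (d := false) (d' := false).
      * rewrite length_restr; reflexivity.
      * intros i Hi. rewrite length_restr in Hi. rewrite nth_restr by auto. auto.
  - intros [H1 H2] i b Hp. destruct (Nat.ltb_spec i (length w)).
    + injection Hp as <-. rewrite <- H2, nth_restr by auto. reflexivity.
    + auto.
Qed.

Fixpoint pfu (fuel : nat) (u : nat -> string) (k n : nat) : option bool :=
  match fuel with
  | 0 => None
  | S f => if n <? length (u k) then Some (nth n (u k) false)
           else if n =? length (u k) then None
           else pfu f u (S k) (n - length (u k) - 1)
  end.
Definition pf u k n := pfu (S n) u k n.

Lemma pfu_enough u : forall f f' k n, n < f -> n < f' -> pfu f u k n = pfu f' u k n.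
Proof.
  induction f as [|f IH]; intros [|f'] k n H1 H2; try lia. simpl.
  destruct (Nat.ltb_spec n (length (u k))); auto. destruct (Nat.eqb_spec n (length (u k))); auto.
  apply IH; lia.
Qed.

Lemma pf_unfold u k n : pf u k n =
  if n <? length (u k) then Some (nth n (u k) false)
  else if n =? length (u k) then None else pf u (S k) (n - length (u k) - 1).
Proof.
  unfold pf at 1. simpl. destruct (Nat.ltb_spec n (length (u k))); auto.
  destruct (Nat.eqb_spec n (length (u k))); auto.
  unfold pf. apply pfu_enough; lia.
Qed.

Lemma compat_prefix p s t : compat p t -> prefix s t -> compat p s.
Proof.
  intros H Hp i b Hi Hq. rewrite <- (prefix_nth s t i Hp Hi). apply H; auto.
  destruct Hp as [r ->]. rewrite length_app. lia.
Qed.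

Lemma L1 u : forall bs k, compat (pf u k) (build_from u k bs).
Proof.
  induction bs as [|c bs IH]; intros k i b Hi Hp; simpl in *; [lia|].
  rewrite pf_unfold in Hp. rewrite length_app in Hi; simpl in Hi.
  destruct (Nat.ltb_spec i (length (u k))).
  - injection Hp as <-. rewrite app_nth1 by auto. reflexivity.
  - destruct (Nat.eqb_spec i (length (u k))); [discriminate|].
    rewrite app_nth2 by lia.
    replace (i - length (u k)) with (S (i - length (u k) - 1)) by lia. simpl.
    apply (IH (S k)); auto. lia.
Qed.

Lemma L3 u : forall n t k, length t <= n -> compat (pf u k) t ->
  exists bs, bs <> [] /\ prefix t (build_from u k bs).
Proof.
  induction n as [|n IH]; intros t k Hl Hc.
  - destruct t; simpl in Hl; [|lia]. exists [false]. split; [discriminate|]. exists (build_from u k [false]). reflexivity.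
  - destruct (Nat.le_gt_cases (length t) (length (u k))) as [Hle|Hgt].
    + exists [false]. split; [discriminate|]. simpl.
      exists (skipn (length t) (u k) ++ [false]).
      rewrite app_assoc. f_equal.
      assert (Ht : t = firstn (length t) (u k)).
      { apply nth_ext with (d := false) (d' := false).
        - rewrite length_firstn. lia.
        - intros i Hi. rewrite nth_firstn. destruct (Nat.ltb_spec i (length t)); [|lia].
          apply Hc; auto. rewrite pf_unfold. destruct (Nat.ltb_spec i (length (u k))); [reflexivity|lia]. }
      rewrite Ht at 1. rewrite firstn_skipn. reflexivity.
    + set (l := length (u k)) in *.
      set (c := nth l t false).
      set (t' := skipn (S l) t).
      assert (Ht : t = u k ++ c :: t').
      { apply nth_ext with (d := false) (d' := false).
        - rewrite length_app. simpl. unfold t'. rewrite length_skipn. lia.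
        - intros i Hi. destruct (Nat.lt_trichotomy i l) as [H1|[H1|H1]].
          + rewrite app_nth1 by auto. apply Hc; auto. rewrite pf_unfold.
            fold l. destruct (Nat.ltb_spec i l); [reflexivity|lia].
          + subst i. rewrite app_nth2 by lia. rewrite Nat.sub_diag. reflexivity.
          + rewrite app_nth2 by lia. fold l. replace (i - l) with (S (i - l - 1)) by lia. cbn [nth].
            unfold t'. rewrite nth_skipn. f_equal. lia. }
      assert (Hc' : compat (pf u (S k)) t').
      { intros i b Hi Hp.
        assert (E: nth i t' false = nth (S l + i) t false) by (unfold t'; rewrite nth_skipn; f_equal; lia).
        rewrite E. apply Hc.
        - unfold t' in Hi; rewrite length_skipn in Hi; lia.
        - rewrite pf_unfold. fold l.
          destruct (Nat.ltb_spec (S l + i) l); [lia|].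
          destruct (Nat.eqb_spec (S l + i) l); [lia|].
          replace (S l + i - l - 1) with i by lia. auto. }
      destruct (IH t' (S k)) as [bs [Hne [r Hr]]]; auto.
      { unfold t'. rewrite length_skipn. lia. }
      exists (c :: bs). split; [discriminate|]. exists r. simpl.
      rewrite Ht at 1. rewrite Hr. rewrite <- app_assoc. reflexivity.
Qed.

Lemma silver_pf u : silverp (pf u 0).
Proof.
  assert (H : forall m k, exists i, m <= i /\ pf u k i = None).
  { induction m as [|m IH]; intros k.
    - exists (length (u k)). split; [lia|]. rewrite pf_unfold.
      rewrite Nat.ltb_irrefl, Nat.eqb_refl. reflexivity.
    - destruct (IH (S k)) as [i [Hi Hp]]. exists (length (u k) + 1 + i). split; [lia|].
      rewrite pf_unfold. destruct (Nat.ltb_spec (length (u k) + 1 + i) (length (u k))); [lia|].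
      destruct (Nat.eqb_spec (length (u k) + 1 + i) (length (u k))); [lia|].
      replace (length (u k) + 1 + i - length (u k) - 1) with i by lia. auto. }
  intro n. apply H.
Qed.

Lemma tof_pf u t : tof (pf u 0) t <-> exists bs, bs <> [] /\ prefix t (silver_build u bs).
Proof.
  split.
  - intro H. apply (L3 u (length t)); auto.
  - intros [bs [_ Hp]]. apply (compat_prefix _ _ _ (L1 u bs 0) Hp).
Qed.

Lemma is_silver_tof T : is_silver T -> exists p, silverp p /\ T = tof p.
Proof.
  intros [u Hu]. exists (pf u 0). split; [apply silver_pf|].
  apply functional_extensionality; intro t. apply propositional_extensionality.
  rewrite Hu, tof_pf. reflexivity.
Qed.

Lemma least_exists (Q : nat -> Prop) : (exists n, Q n) -> exists m, Q m /\ forall j, j < m -> ~ Q j.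
Proof.
  intros [n Hn]. revert Hn. induction n as [n IH] using (well_founded_induction lt_wf).
  intro Hn. destruct (classic (exists j, j < n /\ Q j)) as [[j [Hj HQ]]|Hno].
  - apply (IH j Hj HQ).
  - exists n. split; auto. intros j Hj HQ. apply Hno; eauto.
Qed.

Lemma silver_tof p : silverp p -> is_silver (tof p).
Proof.
  intro Hs.
  assert (Hn : forall m, exists i, (m <= i /\ p i = None) /\ forall j, j < i -> ~ (m <= j /\ p j = None)).
  { intro m. apply least_exists. apply Hs. }
  set (nx := fun m => proj1_sig (constructive_indefinite_description _ (Hn m))).
  assert (Hnx : forall m, (m <= nx m /\ p (nx m) = None) /\ forall j, j < nx m -> ~ (m <= j /\ p j = None)).
  { intro m. unfold nx. destruct (constructive_indefinite_description _ (Hn m)); simpl; auto. }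
  clearbody nx.
  set (start := fun k => match k with 0 => 0 | S k' => S (nat_rect (fun _ => nat) (nx 0) (fun _ r => nx (S r)) k') end).
  set (sp := fun k => nx (start k)).
  assert (Hstart : forall k, start (S k) = S (sp k)).
  { intros [|k]; reflexivity. }
  assert (Hstart0 : start 0 = 0) by reflexivity.
  clearbody start. 
  set (val := fun i => match p i with Some b => b | None => false end).
  set (u := fun k => map val (seq (start k) (sp k - start k))).
  assert (Hlen : forall k, length (u k) = sp k - start k).
  { intro k. unfold u. rewrite length_map, length_seq. reflexivity. }
  assert (Hle : forall k, start k <= sp k). { intro k. apply Hnx. }
  assert (Hpf : forall n k, pf u k n = p (start k + n)).
  { induction n as [n IH] using (well_founded_induction lt_wf). intro k.
    rewrite pf_unfold. rewrite Hlen.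
    destruct (Nat.ltb_spec n (sp k - start k)).
    - unfold u. rewrite nth_indep with (d' := val 0) by (rewrite length_map, length_seq; lia).
      rewrite map_nth, seq_nth by lia. unfold val.
      destruct (p (start k + n)) eqn:E; auto.
      exfalso. apply ((proj2 (Hnx (start k))) (start k + n)); [unfold sp in *; lia| split; [lia|auto]].
    - destruct (Nat.eqb_spec n (sp k - start k)).
      + replace (start k + n) with (sp k) by (specialize (Hle k); lia). symmetry. apply Hnx.
      + rewrite IH by lia. rewrite Hstart. f_equal. specialize (Hle k). lia. }
  exists u. intro t.
  rewrite <- tof_pf. unfold tof.
  assert (E : pf u 0 = p). { apply functional_extensionality. intro n. rewrite Hpf, Hstart0. reflexivity. }
  rewrite E. reflexivity.
Qed.

Lemma no2cycle {X} (R : X -> X -> Prop) : well_founded R -> forall x y, R x y -> R y x -> False.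
Proof.
  intros Hwf x. induction (Hwf x) as [x _ IH]. intros y H1 H2. apply (IH y H2 x H2 H1).
Qed.

Lemma nat_fun (M : structure) : well_founded (elem M) ->
  forall n a m, codes_nat M a n -> codes_nat M a m -> n = m.
Proof.
  intros Hwf. induction n as [|n IH]; intros a [|m] H1 H2; simpl in *; auto.
  - destruct H2 as [a' [_ H]]. exfalso. apply (H1 a'). apply H. right; reflexivity.
  - destruct H1 as [a' [_ H]]. exfalso. apply (H2 a'). apply H. right; reflexivity.
  - destruct H1 as [a1 [Hc1 E1]]. destruct H2 as [a2 [Hc2 E2]].
    assert (a1 = a2).
    { assert (A1 : elem M a1 a2 \/ a1 = a2). { apply E2, E1. right; reflexivity. }
      assert (A2 : elem M a2 a1 \/ a2 = a1). { apply E1, E2. right; reflexivity. }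
      destruct A1; auto. destruct A2; auto. exfalso. apply (no2cycle _ Hwf a1 a2); auto. }
    subst. f_equal. apply (IH a2); auto.
Qed.

Lemma pair_fun (M : structure) {X Y : Type} (c1 : carrier M -> X -> Prop) (c2 : carrier M -> Y -> Prop) :
  (forall a x y, c1 a x -> c1 a y -> x = y) -> (forall a x y, c2 a x -> c2 a y -> x = y) ->
  forall a p q, codes_pair M c1 c2 a p -> codes_pair M c1 c2 a q -> p = q.
Proof.
  intros F1 F2 a [p1 p2] [q1 q2] [u [v [x [y [Hx [Hy [Ha [Hu Hv]]]]]]]]
    [u' [v' [x' [y' [Hx' [Hy' [Ha' [Hu' Hv']]]]]]]]; simpl in *.
  assert (Exx : x' = x).
  { assert (Hua : elem M u a) by (apply Ha; auto).
    apply Ha' in Hua. destruct Hua as [->| ->].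
    - apply Hu, Hu'. reflexivity.
    - apply Hu, Hv'. left; reflexivity. }
  subst x'.
  assert (Eyy : y' = y).
  { assert (Hva : elem M v' a) by (apply Ha'; auto).
    apply Ha in Hva. destruct Hva as [->| ->].
    - assert (y' = x) by (apply Hu, Hv'; right; reflexivity).
      assert (Hva2 : elem M v a) by (apply Ha; auto).
      apply Ha' in Hva2. destruct Hva2 as [E|E].
      + subst v. assert (y = x) by (apply Hu', Hv; right; reflexivity). congruence.
      + subst v. assert (y = x) by (apply Hu, Hv; right; reflexivity). congruence.
    - assert (Hy2 : y' = x \/ y' = y) by (apply Hv, Hv'; right; reflexivity).
      destruct Hy2 as [->|]; auto.
      assert (Hy3 : y = x \/ y = x) by (apply Hv', Hv; right; reflexivity).
      destruct Hy3; congruence. }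
  subst y'. f_equal; eauto.
Qed.

Lemma set_fun (M : structure) {X : Type} (c : carrier M -> X -> Prop) :
  (forall a x y, c a x -> c a y -> x = y) ->
  forall a S S', codes_set M c a S -> codes_set M c a S' -> S = S'.
Proof.
  intros F a S S' [H1 H2] [H1' H2']. apply functional_extensionality; intro s.
  apply propositional_extensionality. split.
  - intro Hs. destruct (H2 s Hs) as [x [Hx Hc]]. destruct (H1' x Hx) as [s' [Hs' Hc']].
    rewrite (F _ _ _ Hc Hc'). auto.
  - intro Hs. destruct (H2' s Hs) as [x [Hx Hc]]. destruct (H1 x Hx) as [s' [Hs' Hc']].
    rewrite (F _ _ _ Hc Hc'). auto.
Qed.

Lemma bit_inj a b : bit a = bit b -> a = b.
Proof. destruct a, b; simpl; congruence. Qed.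

Lemma string_graph_inj s s' : string_graph s = string_graph s' -> s = s'.
Proof.
  intro E. apply nth_error_ext. intro k.
  destruct (nth_error s k) as [b|] eqn:H1.
  - assert (G : string_graph s (k, bit b)) by (exists b; auto).
    rewrite E in G. destruct G as [b' [G1 G2]]. simpl in *. rewrite G1. f_equal. apply bit_inj; auto.
  - destruct (nth_error s' k) as [b|] eqn:H2; auto.
    assert (G : string_graph s' (k, bit b)) by (exists b; auto).
    rewrite <- E in G. destruct G as [b' [G1 G2]]. simpl in *. congruence.
Qed.

Section Codes.
Variable M : structure.
Hypothesis Hwf : well_founded (elem M).

Lemma natpair_fun : forall a x y, codes_pair M (codes_nat M) (codes_nat M) a x ->
  codes_pair M (codes_nat M) (codes_nat M) a y -> x = y.
Proof. apply pair_fun; intros; eapply nat_fun; eauto. Qed.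

Lemma string_fun : forall a x y, codes_string M a x -> codes_string M a y -> x = y.
Proof.
  intros a x y H1 H2. apply string_graph_inj. eapply set_fun; [apply natpair_fun| eauto| eauto].
Qed.

Lemma strset_fun : forall a x y, codes_strset M a x -> codes_strset M a y -> x = y.
Proof. intros a x y H1 H2. eapply set_fun; [apply string_fun| eauto| eauto]. Qed.

Lemma treeset_fun : forall a x y, codes_treeset M a x -> codes_treeset M a y -> x = y.
Proof. intros a x y H1 H2. eapply set_fun; [apply strset_fun| eauto| eauto]. Qed.

Lemma fcode_fun : forall a K K', codes_fcode M a K -> codes_fcode M a K' -> K = K'.
Proof.
  intros a K K' H1 H2.
  assert (E : code_graph K = code_graph K').
  { eapply set_fun; [|eauto|eauto]. apply pair_fun; [apply natpair_fun| apply strset_fun]. }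
  apply functional_extensionality; intro k. apply functional_extensionality; intro b.
  assert (G : code_graph K ((k, bit b), K k b)) by (exists b; simpl; split; [reflexivity| tauto]).
  rewrite E in G. destruct G as [b' [G1 G2]]. simpl in *. apply bit_inj in G1. subst b'.
  apply functional_extensionality; intro t. apply propositional_extensionality. auto.
Qed.
End Codes.

Lemma restr_prefix x m s : prefix s (restr x m) -> s = restr x (length s).
Proof.
  intros [r Hr]. assert (Hl : length s <= m) by (rewrite <- (length_restr x m), Hr, length_app; lia).
  apply nth_ext with (d := false) (d' := false).
  - rewrite length_restr; reflexivity.
  - intros i Hi. rewrite nth_restr by auto. rewrite <- (nth_restr x m i false) by lia.
    rewrite Hr, app_nth1 by auto. reflexivity.
Qed.

Lemma extends_restr x y n : extends y (restr x n) <-> restr y n = restr x n.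
Proof. unfold extends. rewrite length_restr. tauto. Qed.

Lemma fcode_char f x k i : continuous f ->
  (f x k = i <-> exists s, fcode f k i s /\ extends x s).
Proof.
  intro Hc. split.
  - intro Hi. destruct (Hc x k) as [n Hn].
    destruct (least_exists (fun m => forall y, extends y (restr x m) -> f y k = i)) as [m [Hm Hmin]].
    { exists n. intros y Hy. rewrite extends_restr in Hy. rewrite Hn; auto. }
    exists (restr x m). split; [split|].
    + auto.
    + intros s' Hp Hne Hs'. apply restr_prefix in Hp as Hs.
      assert (length s' < m).
      { assert (length s' <= m).
        { destruct Hp as [r Hr]. rewrite <- (length_restr x m), Hr, length_app. lia. }
        destruct (Nat.eq_dec (length s') m); [|lia]. exfalso. apply Hne. rewrite Hs. f_equal. auto. }
      apply (Hmin (length s')); auto. rewrite <- Hs. auto.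
    + unfold extends. rewrite length_restr. reflexivity.
  - intros [s [[H1 _] H2]]. apply H1; auto.
Qed.

Lemma fcode_inj f f' : continuous f -> continuous f' -> fcode f = fcode f' -> f = f'.
Proof.
  intros Hc Hc' E. apply functional_extensionality; intro x. apply functional_extensionality; intro k.
  assert (H := proj1 (fcode_char f x k (f x k) Hc) eq_refl).
  rewrite E in H. apply (fcode_char f' x k (f x k) Hc') in H. auto.
Qed.

Lemma count_D (M : structure) : ctm_ZFCprime M ->
  exists Ds : nat -> (tree -> Prop), forall D, in_model M (codes_treeset M) D -> exists n, Ds n = D.
Proof.
  intros [_ [_ [Hwf [_ [g Hg]]]]].
  exists (fun n => epsilon (inhabits (fun _ : tree => False)) (fun D => codes_treeset M (g n) D)).
  intros D [a Ha]. destruct (Hg a) as [n <-]. exists n.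
  eapply treeset_fun; eauto. apply epsilon_spec. eauto.
Qed.

Lemma count_F (M : structure) : ctm_ZFCprime M ->
  exists Fs : nat -> (real -> real), forall f, continuous f -> in_model M (codes_fcode M) (fcode f) ->
    exists n, Fs n = f.
Proof.
  intros [_ [_ [Hwf [_ [g Hg]]]]].
  exists (fun n => epsilon (inhabits (fun x : real => x))
     (fun f => continuous f /\ codes_fcode M (g n) (fcode f))).
  intros f Hc [a Ha]. destruct (Hg a) as [n <-]. exists n.
  assert (H : continuous (epsilon (inhabits (fun x : real => x))
     (fun f => continuous f /\ codes_fcode M (g n) (fcode f))) /\ codes_fcode M (g n) (fcode
     (epsilon (inhabits (fun x : real => x))
     (fun f => continuous f /\ codes_fcode M (g n) (fcode f))))).
  { apply epsilon_spec. eauto. }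
  destruct H as [H1 H2]. apply fcode_inj; auto. eapply fcode_fun; eauto.
Qed.

Lemma count_P (M : structure) (P : tree -> Prop) : ctm_ZFCprime M -> in_model M (codes_treeset M) P ->
  exists Xs : nat -> tree, forall T, P T -> exists n, Xs n = T.
Proof.
  intros [_ [_ [Hwf [_ [g Hg]]]]] [a [Ha1 Ha2]].
  exists (fun n => epsilon (inhabits (fun _ : string => False)) (fun T => codes_strset M (g n) T)).
  intros T HT. destruct (Ha2 T HT) as [x [_ Hx]]. destruct (Hg x) as [n <-]. exists n.
  eapply strset_fun; eauto. apply epsilon_spec. eauto.
Qed.

Fixpoint sxor (a b : string) : string :=
  match a, b with
  | x :: a', y :: b' => xorb x y :: sxor a' b'
  | [], _ => b
  | _, [] => a
  end.

Lemma sbit_sxor a b i : sbit (sxor a b) i = xorb (sbit a i) (sbit b i).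
Proof.
  unfold sbit. revert b i; induction a as [|x a IH]; intros [|y b] i; simpl.
  - destruct i; reflexivity.
  - destruct i; simpl; [reflexivity|]. reflexivity.
  - destruct i; [destruct x; reflexivity|]. rewrite xorb_false_r. reflexivity.
  - destruct i; auto.
Qed.

Lemma length_sxor a b : length (sxor a b) = Nat.max (length a) (length b).
Proof. revert b; induction a as [|x a IH]; intros [|y b]; simpl; auto. Qed.

Lemma sbit_over s i : length s <= i -> sbit s i = false.
Proof. intro H. unfold sbit. apply nth_overflow; auto. Qed.

Lemma actp_comp a b p : actp a (actp b p) = actp (sxor a b) p.
Proof.
  apply functional_extensionality; intro i. unfold actp. rewrite sbit_sxor.
  destruct (p i) as [c|]; auto. f_equal. destruct c, (sbit a i), (sbit b i); reflexivity.
Qed.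

Lemma actp_nil p : actp [] p = p.
Proof.
  apply functional_extensionality; intro i. unfold actp. rewrite sbit_over by (simpl; lia).
  destruct (p i) as [c|]; auto. rewrite xorb_false_r. auto.
Qed.

Definition refine (Y : pat) (L : nat) (Z : pat) : pat := fun i => if i <? L then Y i else Z i.

Lemma compat_refine Y L Z v : length v = L -> (compat (refine Y L Z) v <-> compat Y v).
Proof.
  intro Hl. unfold compat, refine. split; intros H i b Hi Hp; apply H; auto;
  destruct (Nat.ltb_spec i L); auto; lia.
Qed.

Definition good (P : tree -> Prop) (Y : pat) (L : nat) : Prop :=
  silverp Y /\ forall w, length w = L -> compat Y w -> P (tof (rp Y w)).

Lemma rp_refine Y L Z w : length w = L -> prefines Z (rp Y w) -> rp (refine Y L Z) w = Z.
Proof.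
  intros Hl H. apply functional_extensionality; intro i. unfold rp, refine.
  destruct (Nat.ltb_spec i (length w)).
  - symmetry. apply H. unfold rp. destruct (Nat.ltb_spec i (length w)); [reflexivity|lia].
  - destruct (Nat.ltb_spec i L); [lia|reflexivity].
Qed.

Lemma rp_refine_v Y L Z w v : length w = L -> length v = L -> prefines Z (rp Y w) ->
  rp (refine Y L Z) v = actp (sxor v w) Z.
Proof.
  intros Hl Hv H. apply functional_extensionality; intro i. unfold rp, refine, actp.
  rewrite sbit_sxor. destruct (Nat.ltb_spec i (length v)).
  - assert (E : Z i = Some (sbit w i)).
    { apply H. unfold rp. destruct (Nat.ltb_spec i (length w)); [reflexivity|lia]. }
    rewrite E. f_equal. destruct (sbit v i), (sbit w i); reflexivity.
  - destruct (Nat.ltb_spec i L); [lia|]. rewrite (sbit_over v), (sbit_over w) by lia.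
    destruct (Z i) as [c|]; auto. rewrite xorb_false_r; auto.
Qed.

Lemma prefines_refine Y L Z w : length w = L -> prefines Z (rp Y w) -> prefines (refine Y L Z) Y.
Proof.
  intros Hl H i b Hy. unfold refine. destruct (Nat.ltb_spec i L); auto.
  apply H. unfold rp. destruct (Nat.ltb_spec i (length w)); [lia|auto].
Qed.

Lemma refine_below Y L Z i : i < L -> refine Y L Z i = Y i.
Proof. intro H. unfold refine. destruct (Nat.ltb_spec i L); [auto|lia]. Qed.

Lemma silverp_act s p : silverp p -> silverp (actp s p).
Proof. intros H n. destruct (H n) as [i [Hi Hp]]. exists i. split; auto. unfold actp. rewrite Hp. auto. Qed.

Lemma silverp_rp p w : silverp p -> silverp (rp p w).
Proof.
  intros H n. destruct (H (n + length w)) as [i [Hi Hp]]. exists i. split; [lia|].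
  unfold rp. destruct (Nat.ltb_spec i (length w)); [lia|auto].
Qed.

Lemma P_act (P : tree -> Prop) : silver_forcing P -> forall s p, P (tof p) -> P (tof (actp s p)).
Proof. intros [_ [_ H]] s p Hp. rewrite tof_act. apply H; auto. Qed.

Lemma P_rp (P : tree -> Prop) : silver_forcing P -> forall p w, compat p w -> P (tof p) -> P (tof (rp p w)).
Proof. intros [_ [H _]] p w Hw Hp. rewrite tof_rp by auto. apply H; auto. Qed.

Lemma P_silver (P : tree -> Prop) : silver_forcing P -> forall p, P (tof p) -> silverp p.
Proof.
  intros [H _] p Hp. destruct (is_silver_tof _ (H _ Hp)) as [q [Hq E]].
  assert (E1 : prefines p q) by (apply tof_sub; rewrite <- E; intros t Ht; auto).
  assert (E2 : prefines q p) by (apply tof_sub; rewrite <- E; intros t Ht; auto).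
  intro n. destruct (Hq n) as [i [Hi Hqi]]. exists i. split; auto.
  destruct (p i) as [b|] eqn:Ep; auto. rewrite (E2 _ _ Ep) in Hqi. discriminate.
Qed.

Lemma refine_good (P : tree -> Prop) (HP : silver_forcing P) Y L Z w :
  good P Y L -> length w = L -> compat Y w -> P (tof Z) -> prefines Z (rp Y w) ->
  good P (refine Y L Z) L.
Proof.
  intros [Hs Hg] Hl Hw HZ Hpr. split.
  - intro n. destruct (P_silver P HP Z HZ (n + L)) as [i [Hi Hz]]. exists i. split; [lia|].
    unfold refine. destruct (Nat.ltb_spec i L); [lia|auto].
  - intros v Hv Hc. rewrite (rp_refine_v Y L Z w v) by auto. apply P_act; auto.
Qed.

Fixpoint allstr (L : nat) : list string :=
  match L with
  | 0 => [[]]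
  | S L' => map (cons false) (allstr L') ++ map (cons true) (allstr L')
  end.

Lemma allstr_in w : In w (allstr (length w)).
Proof.
  induction w as [|b w IH]; simpl; auto.
  apply in_or_app. destruct b; [right|left]; apply in_map; auto.
Qed.

Lemma loop {S : Type} (V : S -> Prop) (R : S -> S -> Prop) (Phi : string -> S -> Prop) :
  (forall s, R s s) -> (forall a b c, R a b -> R b c -> R a c) ->
  (forall w s s', V s -> R s' s -> Phi w s -> Phi w s') ->
  (forall w s, V s -> exists s', V s' /\ R s' s /\ Phi w s') ->
  forall ws s, V s -> exists s', V s' /\ R s' s /\ forall w, In w ws -> Phi w s'.
Proof.
  intros Hrefl Htr Hmono Hstep. induction ws as [|w ws IH]; intros s Hs.
  - exists s. repeat split; auto. intros w [].
  - destruct (Hstep w s Hs) as [s1 [H1 [R1 P1]]].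
    destruct (IH s1 H1) as [s2 [H2 [R2 P2]]].
    exists s2. split; auto. split; [eauto|]. intros w' [<-|Hin]; auto.
    eapply Hmono; [exact H1|exact R2|exact P1].
Qed.

Lemma list_choice {A B : Type} (C : A -> Prop) (D : B -> Prop) (Psi : A -> B -> Prop) :
  forall ws : list A, (forall w, In w ws -> C w -> exists T, D T /\ Psi w T) ->
  exists l, (forall T, In T l -> D T) /\ forall w, In w ws -> C w -> exists T, In T l /\ Psi w T.
Proof.
  induction ws as [|w ws IH]; intros H.
  - exists []. split; [intros T []|intros w []].
  - destruct IH as [l [H1 H2]]. { intros; apply H; simpl; auto. }
    destruct (classic (C w)) as [Cw|nCw].
    + destruct (H w (or_introl eq_refl) Cw) as [T [DT PT]].
      exists (T :: l). split.
      * intros T' [<-|Hin]; auto.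
      * intros w' [<-|Hin] Cw'; [exists T; simpl; auto|].
        destruct (H2 w' Hin Cw') as [T' [HT' PT']]. exists T'; simpl; auto.
    + exists l. split; auto. intros w' [<-|Hin] Cw'; [contradiction|auto].
Qed.

Lemma cont_restr (f : real -> real) : continuous f -> forall x m, exists n,
  forall y, restr y n = restr x n -> f y m = f x m.
Proof. intros H x m. apply H. Qed.

Lemma unlinked (f : real -> real) (Z W : pat) : continuous f -> silverp W ->
  exists s s', compat Z s /\ compat W s' /\
    forall y z, inb (rp Z s) y -> inb (rp W s') z -> f y <> z.
Proof.
  intros Hc Hs.
  set (x1 := fillx [] Z). assert (Hx1 : inb Z x1) by (apply fillx_inb; intros i b Hi; simpl in Hi; lia).
  destruct (Hs 0) as [p [_ Hp]].
  set (c := f x1 p).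
  set (z0 := fun i => if i =? p then negb c else match W i with Some b => b | None => false end).
  assert (Hz0 : inb W z0).
  { intros i b Hw. unfold z0. destruct (Nat.eqb_spec i p); [subst; congruence|]. rewrite Hw; auto. }
  destruct (Hc x1 p) as [n Hn].
  exists (restr x1 n), (restr z0 (S p)). split; [apply inb_restr; auto|]. split; [apply inb_restr; auto|].
  intros y z Hy Hz E.
  apply inb_rp in Hy; [|apply inb_restr; auto]. apply inb_rp in Hz; [|apply inb_restr; auto].
  rewrite length_restr in Hy, Hz.
  destruct Hy as [_ Hy]. destruct Hz as [_ Hz].
  assert (E1 : f y p = c) by (apply Hn; auto).
  assert (E2 : z p = z0 p) by (apply (proj1 (restr_eq_iff _ _ _) Hz); lia).
  unfold z0 in E2. rewrite Nat.eqb_refl in E2. rewrite E in E1. rewrite E1 in E2.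
  destruct c; discriminate.
Qed.

Lemma linked (f : real -> real) (Z : pat) (pi : string) : continuous f ->
  (exists x m, inb Z x /\ f x m <> act_real pi x m) ->
  exists s, compat Z s /\ forall y z, inb (rp Z s) y -> inb (actp pi (rp Z s)) z -> f y <> z.
Proof.
  intros Hc [x0 [m [Hx0 Hne]]].
  destruct (Hc x0 m) as [n Hn].
  set (N := n + S m).
  exists (restr x0 N). split; [apply inb_restr; auto|].
  intros y z Hy Hz E.
  apply inb_rp in Hy; [|apply inb_restr; auto]. rewrite length_restr in Hy. destruct Hy as [_ Hy].
  apply inb_act in Hz. apply inb_rp in Hz; [|apply inb_restr; auto]. rewrite length_restr in Hz.
  destruct Hz as [_ Hz].
  rewrite restr_eq_iff in Hy, Hz.
  assert (E1 : f y m = f x0 m).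
  { apply Hn. apply restr_eq_iff. intros i Hi. apply Hy. unfold N; lia. }
  assert (E2 : act_real pi z m = x0 m) by (apply Hz; unfold N; lia).
  apply Hne. rewrite <- E1, E. rewrite act_real_eq in *. rewrite <- E2.
  destruct (z m), (sbit pi m); reflexivity.
Qed.

Lemma body_sub (Z : pat) (T0 : tree) : (forall y, inb Z y -> body T0 y) -> subtree (tof Z) T0.
Proof.
  intros H t Ht. apply tof_ext in Ht. destruct Ht as [x [Hx <-]]. apply H; auto.
Qed.

Lemma adv_good (P : tree -> Prop) (HP : silver_forcing P) Y L p :
  good P Y L -> L <= p -> good P Y (S p).
Proof.
  intros [Hs Hg] Hp. split; auto. intros w' Hl Hc.
  set (w := firstn L w').
  assert (Hwl : length w = L) by (unfold w; rewrite length_firstn; lia).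
  assert (Hpre : prefix w w') by (exists (skipn L w'); unfold w; rewrite firstn_skipn; auto).
  assert (Hw : compat Y w) by (eapply compat_prefix; eauto).
  assert (E : rp Y w' = rp (rp Y w) w').
  { apply functional_extensionality; intro i. unfold rp.
    destruct (Nat.ltb_spec i (length w')); auto. destruct (Nat.ltb_spec i (length w)); auto. lia. }
  rewrite E. apply P_rp; auto.
  intros i b Hi Hq. unfold rp in Hq. destruct (Nat.ltb_spec i (length w)).
  - injection Hq as <-. unfold sbit. rewrite (prefix_nth w w' i Hpre); auto.
  - apply Hc; auto.
Qed.

Definition state := nat -> pat * nat.
Definition upd (st : state) k x : state := fun k' => if k' =? k then x else st k'.
Definition Ys (st : state) k := fst (st k).
Definition Ls (st : state) k := snd (st k).

Lemma upd_same st k x : upd st k x k = x.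
Proof. unfold upd. rewrite Nat.eqb_refl. auto. Qed.
Lemma upd_other st k x k' : k' <> k -> upd st k x k' = st k'.
Proof. intro H. unfold upd. destruct (Nat.eqb_spec k' k); [lia|auto]. Qed.

Definition Req (st st' : state) : Prop := forall k,
  Ls st' k = Ls st k /\ prefines (Ys st' k) (Ys st k) /\ forall i, i < Ls st k -> Ys st' k i = Ys st k i.

Lemma Req_refl st : Req st st.
Proof. intro k. split; [auto|split; [apply prefines_refl|auto]]. Qed.
Lemma Req_trans a b c : Req a b -> Req b c -> Req a c.
Proof.
  intros H1 H2 k. destruct (H1 k) as [A1 [B1 C1]]. destruct (H2 k) as [A2 [B2 C2]].
  split; [congruence|]. split; [eapply prefines_trans; eauto|].
  intros i Hi. rewrite C2 by congruence. auto.
Qed.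

Lemma Req_compat st st' k w : Req st st' -> length w = Ls st k -> (compat (Ys st' k) w <-> compat (Ys st k) w).
Proof.
  intros H Hl. destruct (H k) as [_ [_ C]]. unfold compat. split; intros Hc i b Hi Hp; apply Hc; auto.
  - rewrite C by lia. auto.
  - rewrite <- C by lia. auto.
Qed.

Lemma prefines_rp_mono p q w : prefines p q -> prefines (rp p w) (rp q w).
Proof. intros H i b Hq. unfold rp in *. destruct (i <? length w); auto. Qed.

Lemma prefines_rp p s : compat p s -> prefines (rp p s) p.
Proof.
  intros Hs i b Hp. unfold rp. destruct (Nat.ltb_spec i (length s)); auto.
  f_equal. apply Hs; auto.
Qed.

Section Core.
Variable P : tree -> Prop.
Hypothesis HP : silver_forcing P.

Definition valid (st : state) := forall k, good P (Ys st k) (Ls st k).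

Lemma upd_refine st k w Z : valid st -> length w = Ls st k -> compat (Ys st k) w ->
  P (tof Z) -> prefines Z (rp (Ys st k) w) ->
  let st' := upd st k (refine (Ys st k) (Ls st k) Z, Ls st k) in
  valid st' /\ Req st st' /\ rp (Ys st' k) w = Z /\ Ls st' k = Ls st k /\
  (forall v, length v = Ls st k -> rp (Ys st' k) v = actp (sxor v w) Z) /\
  (forall k', k' <> k -> st' k' = st k').
Proof.
  intros Hv Hl Hc HZ Hpr st'.
  assert (Ek : st' k = (refine (Ys st k) (Ls st k) Z, Ls st k)) by apply upd_same.
  assert (Eo : forall k', k' <> k -> st' k' = st k') by (intros; apply upd_other; auto).
  assert (EY : Ys st' k = refine (Ys st k) (Ls st k) Z) by (unfold Ys; rewrite Ek; auto).
  assert (EL : Ls st' k = Ls st k) by (unfold Ls; rewrite Ek; auto).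
  split; [|split; [|split; [|split; [|split]]]]; auto.
  - intro k'. destruct (Nat.eq_dec k' k) as [->|Hne].
    + rewrite EY, EL. apply (refine_good P HP _ _ Z w (Hv k)); auto.
    + unfold Ys, Ls. rewrite Eo by auto. apply Hv.
  - intro k'. destruct (Nat.eq_dec k' k) as [->|Hne].
    + rewrite EY, EL. split; auto. split.
      * eapply prefines_refine; eauto.
      * intros i Hi. apply refine_below; auto.
    + unfold Ys, Ls. rewrite Eo by auto. split; auto. split; [apply prefines_refl|auto].
  - rewrite EY. apply rp_refine; auto.
  - intros v Hvl. rewrite EY. apply rp_refine_v; auto.
Qed.

Lemma P_pat T : P T -> exists r, T = tof r.
Proof. intro H. destruct (is_silver_tof T (proj1 HP T H)) as [r [_ E]]. eauto. Qed.

Definition BPhi k (D : tree -> Prop) (sg : string) (w : string) (st : state) : Prop :=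
  length w = Ls st k -> compat (Ys st k) w ->
  exists T, D T /\ subtree (tof (actp sg (rp (Ys st k) w))) T.

Lemma B_step k (D : tree -> Prop) sg st : valid st ->
  exists st', valid st' /\ Req st st' /\
    ((forall T, D T -> P T) -> predense P D -> forall w, BPhi k D sg w st').
Proof.
  intros Hv.
  destruct (classic ((forall T, D T -> P T) /\ predense P D)) as [[HD Hpd]|Hno].
  2:{ exists st. split; auto. split; [apply Req_refl|]. intros H1 H2. exfalso; auto. }
  assert (L := loop valid (fun s' s => Req s s') (BPhi k D sg)).
  destruct (L Req_refl) with (ws := allstr (Ls st k)) (s := st) as [st' [V' [R' H']]]; auto.
  - intros a b c H1 H2. eapply Req_trans; eauto.
  - intros w s s' Vs Rs Hphi Hl Hc.
    destruct (Rs k) as [A1 [B1 _]].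
    rewrite A1 in Hl. rewrite (Req_compat s s' k w Rs Hl) in Hc.
    destruct (Hphi Hl Hc) as [T [DT ST]]. exists T. split; auto.
    intros t Ht. apply ST. revert t Ht. apply tof_sub. apply prefines_act. apply prefines_rp_mono. auto.
  - intros w s Vs.
    destruct (classic (length w = Ls s k /\ compat (Ys s k) w)) as [[Hl Hc]|Hno].
    2:{ exists s. split; auto. split; [apply Req_refl|]. intros Hl Hc. exfalso; auto. }
    set (Z0 := rp (Ys s k) w).
    assert (PZ0 : P (tof Z0)) by (apply (proj2 (Vs k)); auto).
    assert (PZ1 : P (tof (actp sg Z0))) by (apply P_act; auto).
    destruct (Hpd _ PZ1) as [T' [DT' [R [PR [S1 S2]]]]].
    destruct (P_pat R PR) as [r ->].
    assert (Hpr : prefines (actp sg r) Z0).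
    { rewrite <- (actp_invol sg Z0). apply prefines_act. apply tof_sub; auto. }
    assert (PZ : P (tof (actp sg r))) by (apply P_act; auto).
    destruct (upd_refine s k w (actp sg r) Vs Hl Hc PZ Hpr) as [V1 [R1 [E1 [E2 _]]]].
    eexists. split; [exact V1|]. split; [exact R1|].
    intros _ _. exists T'. split; auto. rewrite E1, actp_invol. auto.
  - exists st'. split; auto. split; auto. intros _ _ w.
    intros Hl Hc. apply H'; auto.
    destruct (R' k) as [A1 _]. rewrite <- A1, <- Hl. apply allstr_in.
Qed.

Lemma Req_inb st st' k sg w y : Req st st' ->
  inb (actp sg (rp (Ys st' k) w)) y -> inb (actp sg (rp (Ys st k) w)) y.
Proof.
  intros R. apply prefines_inb. apply prefines_act. apply prefines_rp_mono. apply (R k).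
Qed.

Lemma Req_inb0 st st' k sg y : Req st st' -> inb (actp sg (Ys st' k)) y -> inb (actp sg (Ys st k)) y.
Proof. intros R. apply prefines_inb. apply prefines_act. apply (R k). Qed.

Definition CPhi k j (f : real -> real) (T0 : tree) sg tg (w : string) (st : state) : Prop :=
  length w = Ls st k -> compat (Ys st k) w ->
  (forall y, inb (actp sg (rp (Ys st k) w)) y -> ~ body T0 y) \/
  (forall y, inb (actp sg (rp (Ys st k) w)) y -> ~ inb (actp tg (Ys st j)) (f y)).

Definition CPsi k j (f : real -> real) sg tg (w v : string) (st : state) : Prop :=
  length v = Ls st j -> compat (Ys st j) v -> forall y z,
  inb (actp sg (rp (Ys st k) w)) y -> inb (actp tg (rp (Ys st j) v)) z -> f y <> z.

Definition CV k (T0 : tree) sg (w : string) (st : state) : Prop :=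
  valid st /\ length w = Ls st k /\ compat (Ys st k) w /\ (forall y, inb (actp sg (rp (Ys st k) w)) y -> body T0 y).

Lemma CV_mono k T0 sg w st st' : valid st' -> Req st st' -> CV k T0 sg w st -> CV k T0 sg w st'.
Proof.
  intros V R [_ [Hl [Hc Hb]]]. destruct (R k) as [A _].
  split; auto. split; [congruence|]. split.
  - rewrite Req_compat; eauto.
  - intros y Hy. apply Hb. eapply Req_inb; eauto.
Qed.

Lemma C_inner_step k j f T0 sg tg w v st : continuous f -> regular P T0 f ->
  CV k T0 sg w st -> exists st', CV k T0 sg w st' /\ Req st st' /\ CPsi k j f sg tg w v st'.
Proof.
  intros Hf Hreg [Vs [Hl [Hc Hb]]].
  destruct (classic (length v = Ls st j /\ compat (Ys st j) v)) as [[Hlv Hcv]|Hno].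
  2:{ exists st. split; [split; auto|]. split; [apply Req_refl|]. intros H1 H2. exfalso; auto. }
  set (Z := actp sg (rp (Ys st k) w)).
  assert (PZ : P (tof Z)) by (apply P_act; auto; apply (proj2 (Vs k)); auto).
  destruct (Nat.eq_dec k j) as [<-|Hkj].
  -
    set (pi := sxor (sxor tg (sxor v w)) sg).
    assert (Hex : exists x m, inb Z x /\ f x m <> act_real pi x m).
    { apply NNPP. intro Hn. apply Hreg. exists (tof Z), pi. split; auto. split.
      - apply body_sub. auto.
      - intros x Hx m. apply tof_body in Hx. apply NNPP. intro Hne. apply Hn. eauto. }
    destruct (linked f Z pi Hf Hex) as [s [Hs Hsep]].
    set (Zp := actp sg (rp Z s)).
    assert (PZp : P (tof Zp)) by (apply P_act; auto; apply P_rp; auto).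
    assert (Hpr : prefines Zp (rp (Ys st k) w)).
    { unfold Zp. rewrite <- (actp_invol sg (rp (Ys st k) w)). apply prefines_act.
      apply prefines_rp; auto. }
    destruct (upd_refine st k w Zp Vs Hl Hc PZp Hpr) as [V1 [R1 [E1 [E2 [E3 _]]]]].
    set (st1 := upd st k (refine (Ys st k) (Ls st k) Zp, Ls st k)) in *.
    exists st1. split; [apply (CV_mono k T0 sg w st); auto; split; auto|]. split; auto.
    intros _ _ y z Hy Hz. rewrite E1 in Hy. rewrite E3 in Hz by auto.
    unfold Zp in Hy, Hz. rewrite actp_invol in Hy. rewrite !actp_comp in Hz.
    apply (Hsep y z Hy Hz).
  -
    set (W := actp tg (rp (Ys st j) v)).
    assert (PW : P (tof W)) by (apply P_act; auto; apply (proj2 (Vs j)); auto).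
    destruct (unlinked f Z W Hf (P_silver P HP W PW)) as [s [s' [Hs [Hs' Hsep]]]].
    set (Zp := actp sg (rp Z s)).
    assert (PZp : P (tof Zp)) by (apply P_act; auto; apply P_rp; auto).
    assert (Hpr : prefines Zp (rp (Ys st k) w)).
    { unfold Zp. rewrite <- (actp_invol sg (rp (Ys st k) w)). apply prefines_act.
      apply prefines_rp; auto. }
    destruct (upd_refine st k w Zp Vs Hl Hc PZp Hpr) as [V1 [R1 [E1 [E2 [E3 E4]]]]].
    set (st1 := upd st k (refine (Ys st k) (Ls st k) Zp, Ls st k)) in *.
    assert (Ej : st1 j = st j) by (apply E4; auto).
    assert (EYj : Ys st1 j = Ys st j) by (unfold Ys; rewrite Ej; auto).
    assert (ELj : Ls st1 j = Ls st j) by (unfold Ls; rewrite Ej; auto).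
    set (Wp := actp tg (rp W s')).
    assert (PWp : P (tof Wp)) by (apply P_act; auto; apply P_rp; auto).
    assert (Hpr2 : prefines Wp (rp (Ys st1 j) v)).
    { unfold Wp. rewrite EYj. rewrite <- (actp_invol tg (rp (Ys st j) v)). apply prefines_act.
      apply prefines_rp; auto. }
    assert (Hlv1 : length v = Ls st1 j) by congruence.
    assert (Hcv1 : compat (Ys st1 j) v) by (rewrite EYj; auto).
    destruct (upd_refine st1 j v Wp V1 Hlv1 Hcv1 PWp Hpr2) as [V2 [R2 [F1 [F2 [F3 F4]]]]].
    set (st2 := upd st1 j (refine (Ys st1 j) (Ls st1 j) Wp, Ls st1 j)) in *.
    assert (Ek : st2 k = st1 k) by (apply F4; auto).
    assert (EYk : Ys st2 k = Ys st1 k) by (unfold Ys; rewrite Ek; auto).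
    exists st2. split.
    + apply (CV_mono k T0 sg w st); auto; [eapply Req_trans; eauto| split; auto].
    + split; [eapply Req_trans; eauto|].
      intros _ _ y z Hy Hz. rewrite EYk, E1 in Hy. rewrite F1 in Hz.
      unfold Zp, Wp in *. rewrite actp_invol in Hy, Hz. apply (Hsep y z Hy Hz).
Qed.


Lemma CPsi_mono k j f sg tg w v s s' : Req s s' -> CPsi k j f sg tg w v s -> CPsi k j f sg tg w v s'.
Proof.
  intros R H Hl Hc y z Hy Hz. destruct (R j) as [A _].
  assert (Hl' : length v = Ls s j) by congruence.
  apply (H Hl'); [rewrite <- (Req_compat s s' j v R Hl'); auto| |]; eapply Req_inb; eauto.
Qed.

Lemma CPhi_mono k j f T0 sg tg w s s' : Req s s' -> CPhi k j f T0 sg tg w s -> CPhi k j f T0 sg tg w s'.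
Proof.
  intros R H Hl Hc. destruct (R k) as [A _].
  assert (Hl' : length w = Ls s k) by congruence.
  destruct (H Hl') as [H1|H2]; [rewrite <- (Req_compat s s' k w R Hl'); auto| |].
  - left. intros y Hy. apply H1. eapply Req_inb; eauto.
  - right. intros y Hy Hin. apply (H2 y); [eapply Req_inb; eauto|]. eapply Req_inb0; eauto.
Qed.

Lemma C_step k j f T0 sg tg st : valid st ->
  exists st', valid st' /\ Req st st' /\
    (continuous f -> regular P T0 f -> forall w, CPhi k j f T0 sg tg w st').
Proof.
  intros Hv.
  destruct (classic (continuous f /\ regular P T0 f)) as [[Hf Hreg]|Hno].
  2:{ exists st. split; auto. split; [apply Req_refl|]. intros H1 H2. exfalso; auto. }
  assert (L := loop valid (fun s' s => Req s s') (CPhi k j f T0 sg tg)).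
  destruct (L Req_refl) with (ws := allstr (Ls st k)) (s := st) as [st' [V' [R' H']]]; auto.
  - intros a b c H1 H2. eapply Req_trans; eauto.
  - intros w s s' _ Rs Hphi. eapply CPhi_mono; eauto.
  - intros w s Vs.
    destruct (classic (length w = Ls s k /\ compat (Ys s k) w)) as [[Hl Hc]|Hno].
    2:{ exists s. split; auto. split; [apply Req_refl|]. intros Hl Hc. exfalso; auto. }
    set (Z := actp sg (rp (Ys s k) w)).
    assert (PZ : P (tof Z)) by (apply P_act; auto; apply (proj2 (Vs k)); auto).
    destruct (classic (forall y, inb Z y -> body T0 y)) as [Hin|Hout].
    + assert (L2 := loop (CV k T0 sg w) (fun s' s => Req s s') (CPsi k j f sg tg w)).
      destruct (L2 Req_refl) with (ws := allstr (Ls s j)) (s := s) as [s2 [V2 [R2 H2]]].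
      * intros a b c H1 H3. eapply Req_trans; eauto.
      * intros v a b _ Rs Hpsi. eapply CPsi_mono; eauto.
      * intros v a Va. apply C_inner_step; auto.
      * split; auto.
      * exists s2. split; [apply V2|]. split; auto.
        intros _ _. right. intros y Hy Hfy.
        set (x' := act_real tg (f y)).
        assert (Hx' : inb (Ys s2 j) x') by (apply inb_act; auto).
        set (v := restr x' (Ls s2 j)).
        assert (Hcv : compat (Ys s2 j) v) by (apply inb_restr; auto).
        assert (Hlv : length v = Ls s2 j) by (apply length_restr).
        assert (Hinv : In v (allstr (Ls s j))).
        { destruct (R2 j) as [A _]. rewrite <- A, <- Hlv. apply allstr_in. }
        apply (H2 v Hinv Hlv Hcv y (f y) Hy); auto.
        apply inb_act. apply inb_rp; auto. split; auto. rewrite Hlv. reflexivity.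
    + apply not_all_ex_not in Hout. destruct Hout as [y Hy].
      apply imply_to_and in Hy. destruct Hy as [Hy Hnb].
      apply not_all_ex_not in Hnb. destruct Hnb as [n Hn].
      set (s0 := restr y n).
      assert (Hs0 : compat Z s0) by (apply inb_restr; auto).
      set (Zp := actp sg (rp Z s0)).
      assert (PZp : P (tof Zp)) by (apply P_act; auto; apply P_rp; auto).
      assert (Hpr : prefines Zp (rp (Ys s k) w)).
      { unfold Zp. rewrite <- (actp_invol sg (rp (Ys s k) w)). apply prefines_act.
        apply prefines_rp; auto. }
      destruct (upd_refine s k w Zp Vs Hl Hc PZp Hpr) as [V1 [R1 [E1 _]]].
      eexists. split; [exact V1|]. split; [exact R1|].
      intros _ _. left. intros y' Hy' Hb. rewrite E1 in Hy'. unfold Zp in Hy'.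
      rewrite actp_invol in Hy'. apply inb_rp in Hy'; auto. destruct Hy' as [_ Hr].
      unfold s0 in Hr. rewrite length_restr in Hr. apply Hn. rewrite <- Hr. apply Hb.
  - exists st'. split; auto. split; auto. intros _ _ w Hl Hc. apply H'; auto.
    destruct (R' k) as [A1 _]. rewrite <- A1, <- Hl. apply allstr_in.
Qed.

Lemma adv_step k st : valid st -> exists st', valid st' /\
  (forall k', Ls st k' <= Ls st' k' /\ prefines (Ys st' k') (Ys st k') /\
     forall i, i < Ls st k' -> Ys st' k' i = Ys st k' i) /\
  Ls st k < Ls st' k /\ Ys st' k (Ls st' k - 1) = None.
Proof.
  intros Hv. destruct (Hv k) as [Hs _]. destruct (Hs (Ls st k)) as [p [Hp Hn]].
  exists (upd st k (Ys st k, S p)).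
  assert (Ek : upd st k (Ys st k, S p) k = (Ys st k, S p)) by apply upd_same.
  set (st' := upd st k (Ys st k, S p)) in *.
  assert (EY : Ys st' k = Ys st k) by (unfold Ys at 1; rewrite Ek; auto).
  assert (EL : Ls st' k = S p) by (unfold Ls at 1; rewrite Ek; auto).
  assert (Eo : forall k', k' <> k -> st' k' = st k') by (intros; apply upd_other; auto).
  split; [|split; [|split]].
  - intro k'. destruct (Nat.eq_dec k' k) as [->|Hne].
    + rewrite EY, EL. apply adv_good with (L := Ls st k); auto.
    + unfold Ys, Ls. rewrite Eo by auto. apply Hv.
  - intro k'. destruct (Nat.eq_dec k' k) as [->|Hne].
    + rewrite EY, EL. split; [lia|]. split; [apply prefines_refl|auto].
    + unfold Ys, Ls. rewrite Eo by auto. split; auto. split; [apply prefines_refl|auto].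
  - rewrite EL. lia.
  - rewrite EY, EL. replace (S p - 1) with p by lia. auto.
Qed.

End Core.

Lemma bits_exist : forall N (h : nat -> bool), exists a, forall i, i < N -> Nat.testbit a i = h i.
Proof.
  induction N as [|N IH]; intros h.
  - exists 0. intros; lia.
  - destruct (IH (fun i => h (S i))) as [a Ha].
    exists ((if h 0 then 1 else 0) + 2 * a). intros [|i] Hi.
    + destruct (h 0).
      * replace (1 + 2 * a) with (2 * a + 1) by lia. apply Nat.testbit_odd_0.
      * rewrite Nat.add_0_l. apply Nat.testbit_even_0.
    + destruct (h 0).
      * replace (1 + 2 * a) with (2 * a + 1) by lia. change (S i) with (Nat.succ i); rewrite Nat.testbit_odd_succ by lia. apply Ha; lia.
      * rewrite Nat.add_0_l. change (S i) with (Nat.succ i); rewrite Nat.testbit_even_succ by lia. apply Ha; lia.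
Qed.

Definition Ss (n : nat) : string := let (L, a) := of_nat n in map (Nat.testbit a) (seq 0 L).

Lemma nth_map_seq (g : nat -> bool) N i : i < N -> nth i (map g (seq 0 N)) false = g i.
Proof.
  intro H. rewrite nth_indep with (d' := g 0) by (rewrite length_map, length_seq; lia).
  rewrite map_nth, seq_nth by lia. reflexivity.
Qed.

Lemma Ss_surj s : exists n, Ss n = s.
Proof.
  destruct (bits_exist (length s) (fun i => nth i s false)) as [a Ha].
  exists (to_nat (length s, a)). unfold Ss. rewrite cancel_of_to.
  apply nth_ext with (d := false) (d' := false).
  - rewrite length_map, length_seq. auto.
  - intros i Hi. rewrite length_map, length_seq in Hi. rewrite nth_map_seq by auto. auto.
Qed.

Definition Rm (st st' : state) : Prop := forall k', Ls st k' <= Ls st' k' /\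
  prefines (Ys st' k') (Ys st k') /\ forall i, i < Ls st k' -> Ys st' k' i = Ys st k' i.

Lemma Req_Rm st st' : Req st st' -> Rm st st'.
Proof. intros H k. destruct (H k) as [A [B C]]. split; [lia|auto]. Qed.

Section Main.
Variable P : tree -> Prop.
Hypothesis HP : silver_forcing P.
Variable Xs : nat -> tree.
Hypothesis HXs : forall n, P (Xs n).
Hypothesis HXsurj : forall T, P T -> exists n, Xs n = T.
Variable Ds : nat -> (tree -> Prop).
Variable Fs : nat -> (real -> real).

Definition Post (i : nat) (st st' : state) : Prop :=
  let (t, r1) := of_nat i in let (k, r2) := of_nat r1 in let (j, r3) := of_nat r2 in
  let (a, r4) := of_nat r3 in let (b, r5) := of_nat r4 in let (c, d) := of_nat r5 in
  (t = 0 -> Ls st k < Ls st' k /\ Ys st' k (Ls st' k - 1) = None) /\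
  (t = 1 -> (forall T, Ds a T -> P T) -> predense P (Ds a) -> forall w, BPhi k (Ds a) (Ss c) w st') /\
  (t = 2 -> continuous (Fs a) -> regular P (Xs b) (Fs a) ->
     forall w, CPhi k j (Fs a) (Xs b) (Ss c) (Ss d) w st').

Definition enc t k j a b c d := to_nat (t, to_nat (k, to_nat (j, to_nat (a, to_nat (b, to_nat (c, d)))))).

Lemma Post_enc t k j a b c d st st' : Post (enc t k j a b c d) st st' ->
  (t = 0 -> Ls st k < Ls st' k /\ Ys st' k (Ls st' k - 1) = None) /\
  (t = 1 -> (forall T, Ds a T -> P T) -> predense P (Ds a) -> forall w, BPhi k (Ds a) (Ss c) w st') /\
  (t = 2 -> continuous (Fs a) -> regular P (Xs b) (Fs a) ->
     forall w, CPhi k j (Fs a) (Xs b) (Ss c) (Ss d) w st').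
Proof. unfold Post, enc. rewrite !cancel_of_to. auto. Qed.

Lemma step i st : valid P st -> exists st', valid P st' /\ Rm st st' /\ Post i st st'.
Proof.
  intro Hv. unfold Post.
  destruct (of_nat i) as [t r1]. destruct (of_nat r1) as [k r2]. destruct (of_nat r2) as [j r3].
  destruct (of_nat r3) as [a r4]. destruct (of_nat r4) as [b r5]. destruct (of_nat r5) as [c d].
  destruct t as [|[|[|t]]].
  - destruct (adv_step P HP k st Hv) as [st' [V [R [A1 A2]]]].
    exists st'. split; auto. split; auto. split; [auto|split; intros; discriminate].
  - destruct (B_step P HP k (Ds a) (Ss c) st Hv) as [st' [V [R H]]].
    exists st'. split; auto. split; [apply Req_Rm; auto|]. split; [intros; discriminate|].
    split; [auto|intros; discriminate].
  - destruct (C_step P HP k j (Fs a) (Xs b) (Ss c) (Ss d) st Hv) as [st' [V [R H]]].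
    exists st'. split; auto. split; [apply Req_Rm; auto|]. split; [intros; discriminate|].
    split; [intros; discriminate|auto].
  - exists st. split; auto. split; [apply Req_Rm, Req_refl|]. repeat split; intros; discriminate.
Qed.

Lemma stepT (m : nat) (st : state) : exists st',
  valid P st -> valid P st' /\ Rm st st' /\ Post (fst (of_nat m)) st st'.
Proof.
  destruct (classic (valid P st)) as [Hv|Hn].
  - destruct (step (fst (of_nat m)) st Hv) as [st' H]. exists st'. auto.
  - exists st. intro; contradiction.
Qed.

Definition Fn (m : nat) (st : state) : state :=
  proj1_sig (constructive_indefinite_description _ (stepT m st)).

Lemma Fn_spec m st : valid P st -> valid P (Fn m st) /\ Rm st (Fn m st) /\ Post (fst (of_nat m)) st (Fn m st).
Proof. unfold Fn. destruct (constructive_indefinite_description _ (stepT m st)); simpl. auto. Qed.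

Definition pX (k : nat) : pat := epsilon (inhabits (fun _ : nat => @None bool)) (fun p => Xs k = tof p).

Lemma pX_spec k : Xs k = tof (pX k).
Proof.
  unfold pX. apply epsilon_spec. destruct (P_pat P HP (Xs k) (HXs k)) as [r E]. eauto.
Qed.

Definition init : state := fun k => (pX k, 0).

Lemma rp_nil p : rp p [] = p.
Proof. apply functional_extensionality; intro i. reflexivity. Qed.

Lemma init_valid : valid P init.
Proof.
  intro k. unfold Ys, Ls, init; simpl. split.
  - apply (P_silver P HP). rewrite <- pX_spec. auto.
  - intros w Hw _. destruct w; [|discriminate]. rewrite rp_nil, <- pX_spec. auto.
Qed.

Fixpoint sq (m : nat) : state := match m with 0 => init | S m' => Fn m' (sq m') end.

Lemma sq_valid m : valid P (sq m).
Proof. induction m; simpl; [apply init_valid| apply Fn_spec; auto]. Qed.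

Lemma sq_step m : Rm (sq m) (sq (S m)) /\ Post (fst (of_nat m)) (sq m) (sq (S m)).
Proof. simpl. apply Fn_spec, sq_valid. Qed.

Lemma sq_mono k m d : Ls (sq m) k <= Ls (sq (m + d)) k /\ prefines (Ys (sq (m + d)) k) (Ys (sq m) k) /\
  forall i, i < Ls (sq m) k -> Ys (sq (m + d)) k i = Ys (sq m) k i.
Proof.
  induction d as [|d [A [B C]]].
  - rewrite Nat.add_0_r. split; auto. split; [apply prefines_refl|auto].
  - replace (m + S d) with (S (m + d)) by lia.
    destruct (proj1 (sq_step (m + d)) k) as [A' [B' C']].
    split; [lia|]. split; [eapply prefines_trans; eauto|].
    intros i Hi. rewrite C' by lia. auto.
Qed.

Lemma sq_mono' k m m' : m <= m' -> Ls (sq m) k <= Ls (sq m') k /\ prefines (Ys (sq m') k) (Ys (sq m) k) /\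
  forall i, i < Ls (sq m) k -> Ys (sq m') k i = Ys (sq m) k i.
Proof. intro H. replace m' with (m + (m' - m)) by lia. apply sq_mono. Qed.

Lemma often i m0 : exists m, m0 <= m /\ fst (of_nat m) = i.
Proof.
  exists (to_nat (i, m0)). rewrite cancel_of_to. split; auto.
  pose proof (to_nat_non_decreasing i m0). lia.
Qed.

Lemma adv_at k m0 : exists m, m0 <= m /\ Ls (sq m) k < Ls (sq (S m)) k /\
  Ys (sq (S m)) k (Ls (sq (S m)) k - 1) = None.
Proof.
  destruct (often (enc 0 k 0 0 0 0 0) m0) as [m [Hm Hi]]. exists m. split; auto.
  destruct (sq_step m) as [_ Hp]. rewrite Hi in Hp. apply Post_enc in Hp. apply Hp. auto.
Qed.

Lemma unbounded k N : exists m, N <= Ls (sq m) k.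
Proof.
  induction N as [|N [m Hm]]. - exists 0. lia.
  - destruct (adv_at k m) as [m' [H1 [H2 _]]]. exists (S m').
    destruct (sq_mono' k m m' H1) as [A _]. lia.
Qed.

Definition mi (k i : nat) : nat := epsilon (inhabits 0) (fun m => i < Ls (sq m) k).
Lemma mi_spec k i : i < Ls (sq (mi k i)) k.
Proof. unfold mi. apply epsilon_spec. apply (unbounded k (S i)). Qed.

Definition U (k : nat) : pat := fun i => Ys (sq (mi k i)) k i.

Lemma Ustab k m i : i < Ls (sq m) k -> U k i = Ys (sq m) k i.
Proof.
  intro H. unfold U. set (m1 := mi k i). assert (H1 := mi_spec k i). fold m1 in H1.
  destruct (Nat.le_ge_cases m m1) as [Hle|Hle].
  - destruct (sq_mono' k m m1 Hle) as [_ [_ C]]. auto.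
  - destruct (sq_mono' k m1 m Hle) as [_ [_ C]]. symmetry; auto.
Qed.

Lemma Uref k m : prefines (U k) (Ys (sq m) k).
Proof.
  intros i b Hb. destruct (unbounded k (S i)) as [m1 Hm1].
  set (m2 := Nat.max m m1).
  destruct (sq_mono' k m m2 (Nat.le_max_l _ _)) as [_ [B _]].
  destruct (sq_mono' k m1 m2 (Nat.le_max_r _ _)) as [A _].
  rewrite (Ustab k m2 i) by lia. apply B; auto.
Qed.

Lemma Usilver k : silverp (U k).
Proof.
  intro N. destruct (unbounded k N) as [m Hm]. destruct (adv_at k m) as [m' [H1 [H2 H3]]].
  destruct (sq_mono' k m m' H1) as [A _].
  exists (Ls (sq (S m')) k - 1). split; [lia|].
  rewrite (Ustab k (S m')) by lia. auto.
Qed.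


Definition Q : tree -> Prop := fun T => exists k p N, T = tof p /\
  (forall i, N <= i -> p i = U k i) /\ (forall i, i < N -> p i = None -> U k i = None).

Definition mkflip (p u : pat) N : string :=
  map (fun i => match p i, u i with Some a, Some b => xorb a b | _, _ => false end) (seq 0 N).

Lemma flip_inb (p u : pat) N x : (forall i, N <= i -> p i = u i) -> (forall i, i < N -> p i = None -> u i = None) ->
  inb p x -> inb u (act_real (mkflip p u N) x).
Proof.
  intros H1 H2 Hx i b Hu. rewrite act_real_eq. unfold sbit, mkflip.
  destruct (Nat.lt_ge_cases i N) as [Hi|Hi].
  - rewrite nth_map_seq by auto. rewrite Hu.
    destruct (p i) as [c|] eqn:E.
    + rewrite (Hx i c E). destruct c, b; reflexivity.
    + rewrite (H2 i Hi E) in Hu. discriminate.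
  - rewrite nth_overflow by (rewrite length_map, length_seq; lia).
    rewrite (Hx i b) by (rewrite H1; auto). destruct b; reflexivity.
Qed.

Lemma Q_silver : silver_forcing Q.
Proof.
  split; [|split].
  - intros T [k [p [N [-> [H1 H2]]]]]. apply silver_tof.
    intro n. destruct (Usilver k (n + N)) as [i [Hi Hu]]. exists i. split; [lia|].
    rewrite H1 by lia. auto.
  - intros T u [k [p [N [-> [H1 H2]]]]] Hu. rewrite <- tof_rp by auto.
    exists k, (rp p u), (Nat.max N (length u)). split; auto. split.
    + intros i Hi. unfold rp. destruct (Nat.ltb_spec i (length u)); [lia|]. apply H1; lia.
    + intros i Hi Hn. unfold rp in Hn. destruct (Nat.ltb_spec i (length u)); [discriminate|].
      destruct (Nat.lt_ge_cases i N); auto. rewrite <- H1 by auto. auto.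
  - intros T sg [k [p [N [-> [H1 H2]]]]]. rewrite <- tof_act.
    exists k, (actp sg p), (Nat.max N (length sg)). split; auto. split.
    + intros i Hi. unfold actp. rewrite sbit_over by lia. rewrite <- H1 by lia.
      destruct (p i); auto. rewrite xorb_false_r. auto.
    + intros i Hi Hn. unfold actp in Hn. destruct (p i) eqn:E; [discriminate|].
      destruct (Nat.lt_ge_cases i N); auto. rewrite <- H1 by auto. auto.
Qed.

Lemma Q_count : countable_trees Q.
Proof.
  exists (fun n => let (k, r) := of_nat n in let (N, r') := of_nat r in let (a, b) := of_nat r' in
     tof (fun i => if i <? N then (if Nat.testbit a i then Some (Nat.testbit b i) else None) else U k i)).
  intros T [k [p [N [-> [H1 H2]]]]].
  destruct (bits_exist N (fun i => match p i with Some _ => true | None => false end)) as [a Ha].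
  destruct (bits_exist N (fun i => match p i with Some c => c | None => false end)) as [b Hb].
  exists (to_nat (k, to_nat (N, to_nat (a, b)))). rewrite !cancel_of_to. f_equal.
  apply functional_extensionality; intro i. destruct (Nat.ltb_spec i N).
  - rewrite Ha, Hb by auto. destruct (p i); auto.
  - symmetry. apply H1. auto.
Qed.

Lemma Q_A : forall T, Q T \/ P T -> exists U0, Q U0 /\ subtree U0 T.
Proof.
  intros T [HQ|HPT].
  - exists T. split; auto. intros t Ht; auto.
  - destruct (HXsurj T HPT) as [n <-]. exists (tof (U n)). split.
    + exists n, (U n), 0. split; [auto|split; [auto|intros; lia]].
    + rewrite (pX_spec n). apply tof_sub. assert (H := Uref n 0). simpl in H.
      unfold Ys, init in H. simpl in H. auto.
Qed.

Lemma Q_B : forall d, (forall T, Ds d T -> P T) -> predense P (Ds d) ->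
  forall U0, Q U0 -> exists D' : list tree,
    (forall T, In T D' -> Ds d T) /\ (forall t, U0 t -> exists T, In T D' /\ T t).
Proof.
  intros d HD Hpd U0 [k [p [N [-> [H1 H2]]]]].
  set (sg := mkflip p (U k) N).
  destruct (Ss_surj sg) as [c Hc].
  set (m := to_nat (enc 1 k 0 d 0 c 0, 0)).
  destruct (sq_step m) as [_ Hp]. unfold m in Hp at 1. rewrite cancel_of_to in Hp. cbn [fst] in Hp.
  apply Post_enc in Hp. destruct Hp as [_ [Hp _]]. specialize (Hp eq_refl HD Hpd).
  rewrite Hc in Hp.
  set (st := sq (S m)) in *.
  destruct (list_choice (fun w => length w = Ls st k /\ compat (Ys st k) w) (Ds d)
     (fun w T => subtree (tof (actp sg (rp (Ys st k) w))) T) (allstr (Ls st k))) as [l [Hl1 Hl2]].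
  { intros w _ [Hw1 Hw2]. apply Hp; auto. }
  exists l. split; auto. intros t Ht.
  apply tof_ext in Ht. destruct Ht as [x [Hx Ht]].
  set (x' := act_real sg x).
  assert (Hx' : inb (U k) x') by (apply flip_inb; auto).
  assert (Hx'' : inb (Ys st k) x') by (eapply prefines_inb; [apply Uref|]; eauto).
  set (w := restr x' (Ls st k)).
  assert (Hwl : length w = Ls st k) by apply length_restr.
  assert (Hwc : compat (Ys st k) w) by (apply inb_restr; auto).
  destruct (Hl2 w) as [T [HT Hsub]]; [rewrite <- Hwl; apply allstr_in| split; auto|].
  exists T. split; auto. apply Hsub. apply tof_ext. exists x. split; auto.
  apply inb_act. apply inb_rp; auto. split; auto. rewrite Hwl. reflexivity.
Qed.

Lemma Q_C : forall a b, continuous (Fs a) -> regular P (Xs b) (Fs a) ->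
  forall U0 V, Q U0 -> Q V -> subtree U0 (Xs b) -> forall x, body U0 x -> ~ body V (Fs a x).
Proof.
  intros a b Hf Hreg U0 V [k [p [N [-> [H1 H2]]]]] [j [q [N' [-> [H1' H2']]]]] Hsub x Hx Hv.
  set (sg := mkflip p (U k) N). set (tg := mkflip q (U j) N').
  destruct (Ss_surj sg) as [c Hc]. destruct (Ss_surj tg) as [e He].
  set (m := to_nat (enc 2 k j a b c e, 0)).
  destruct (sq_step m) as [_ Hp]. unfold m in Hp at 1. rewrite cancel_of_to in Hp. cbn [fst] in Hp.
  apply Post_enc in Hp. destruct Hp as [_ [_ Hp]]. specialize (Hp eq_refl Hf Hreg).
  rewrite Hc, He in Hp.
  set (st := sq (S m)) in *.
  apply tof_body in Hx. apply tof_body in Hv.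
  set (x' := act_real sg x).
  assert (Hx' : inb (U k) x') by (apply flip_inb; auto).
  assert (Hx'' : inb (Ys st k) x') by (eapply prefines_inb; [apply Uref|]; eauto).
  set (w := restr x' (Ls st k)).
  assert (Hwl : length w = Ls st k) by apply length_restr.
  assert (Hwc : compat (Ys st k) w) by (apply inb_restr; auto).
  assert (Hxin : inb (actp sg (rp (Ys st k) w)) x).
  { apply inb_act. apply inb_rp; auto. split; auto. rewrite Hwl. reflexivity. }
  destruct (Hp w Hwl Hwc) as [A1|A2].
  - apply (A1 x Hxin). apply (sub_body (tof p)); auto. apply tof_body; auto.
  - apply (A2 x Hxin). apply inb_act.
    eapply prefines_inb; [apply Uref|]. apply flip_inb; eauto.
Qed.

End Main.

Theorem theorem8p3 :
  forall (M : structure) (P : tree -> Prop),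
    ctm_ZFCprime M ->
    silver_forcing P ->
    in_model M (codes_treeset M) P ->
    exists Q : tree -> Prop,
      silver_forcing Q /\ countable_trees Q /\ sqsubset M P Q.
Proof.
  intros M P Hm HP HPm.
  destruct (classic (exists T, P T)) as [[Ts HTs]|Hno].
  2:{ exists (fun _ => False). split; [|split].
      - split; [intros T []|split; [intros T u []|intros T s []]].
      - exists (fun _ _ => False). intros T [].
      - split; [|split].
        + intros T [[]|HT]. exfalso; eauto.
        + intros D _ _ _ U0 [].
        + intros T0 f HT0. exfalso; eauto. }
  destruct (count_P M P Hm HPm) as [Xs0 HX0].
  set (Xs := fun n => if excluded_middle_informative (P (Xs0 n)) then Xs0 n else Ts).
  assert (HXs : forall n, P (Xs n)).
  { intro n. unfold Xs. destruct (excluded_middle_informative (P (Xs0 n))); auto. }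
  assert (HXsurj : forall T, P T -> exists n, Xs n = T).
  { intros T HT. destruct (HX0 T HT) as [n <-]. exists n. unfold Xs.
    destruct (excluded_middle_informative (P (Xs0 n))); [auto|contradiction]. }
  destruct (count_D M Hm) as [Ds HD]. destruct (count_F M Hm) as [Fs HF].
  exists (Q P HP Xs Ds Fs). split; [apply Q_silver; auto|]. split; [apply Q_count|].
  split; [|split].
  - apply Q_A; auto.
  - intros D HDm Hsub Hpd U0 HU. destruct (HD D HDm) as [d <-].
    apply (Q_B P HP Xs HXs Ds Fs d); auto.
  - intros T0 f HT0 Hc Hfm Hreg U0 V HU HV Hs x Hx.
    destruct (HXsurj T0 HT0) as [b <-]. destruct (HF f Hc Hfm) as [a <-].
    exact (Q_C P HP Xs HXs Ds Fs a b Hc Hreg U0 V HU HV Hs x Hx).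
Qed.
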